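(* Let $n$ be a positive integer, $1\le k\le n$, $w\in\mathfrak S_n$, and let $R$ be a consistent subset of $\mathrm{Inv}_{k+1}(w)$ (i.e. $R\in\mathcal C_w(n,k+1)$). Then the directed graph $G_R$ is acyclic.
   Context: $\mathfrak S_n$ is the symmetric group on $[n]$. $\binom{[n]}{m}$ is the set of $m$-subsets of $[n]$ written $[x_1,\dots,x_m]$ with $x_1<\dots<x_m$; $X_i$ is $X$ with $x_i$ removed; $P(X)=\{X_1,\dots,X_m\}$. A prefix of $P(X)$ is a set $\{X_m,\dots,X_i\}$ and a suffix a set $\{X_i,\dots,X_1\}$ (the empty set counts as both). $\mathrm{Inv}_m(w)=\{[x_1,\dots,x_m]\in\binom{[n]}{m}:w^{-1}(x_1)>\dots>w^{-1}(x_m)\}$. $X\in\binom{[n]}{m}$ is an $m$-quasi-inversion of $w$ if exactly one pair $[x_a,x_b]$, $a<b$, is not in $\mathrm{Inv}_2(w)$. The quasi-inversion relations on $\mathrm{Inv}_m(w)$: whenever $X\in\binom{[n]}{m+1}$ is a quasi-inversion with $P(X)\cap\mathrm{Inv}_m(w)=\{X_i,X_{i+1}\}$, $X_i<X_{i+1}$ if $m-i$ is odd and $X_{i+1}<X_i$ if $m-i$ is even; $\mathcal P_w(n,m)$ is $\mathrm{Inv}_m(w)$ with the reflexive-transitive closure of these. $R\subseteq\mathrm{Inv}_{k+1}(w)$ is consistent if it is a lower order ideal of $\mathcal P_w(n,k+1)$ and for every $X\in\mathrm{Inv}_{k+2}(w)$, $P(X)\cap R$ is a prefix or suffix of $P(X)$.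 The directed graph $G_R$ has vertex set $\mathrm{Inv}_k(w)$ and directed edges: $X\to Y$ whenever $X<Y$ is a quasi-inversion relation on $\mathrm{Inv}_k(w)$; $X_i\to X_{i+1}$ for all $1\le i\le k$ whenever $X\in R$; and $X_{i+1}\to X_i$ for all $1\le i\le k$ whenever $X\in\mathrm{Inv}_{k+1}(w)\setminus R$. *)

(* Defs.v *)
From mathcomp Require Import all_boot all_order all_fingroup.
From Stdlib Require Import Relations.
Set Implicit Arguments. Unset Strict Implicit. Unset Printing Implicit Defensive.

(* [n] is modelled by 'I_n (0-based, same order); w : 'S_n = {perm 'I_n}.
   For X : {set 'I_n}, enum X lists the elements of X in increasing order,
   so x_i = nth _ (enum X) i.-1 (1-indexed). *)

Section QuasiInv.
Variables (n : nat) (w : 'S_n).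

Definition pos (x : 'I_n) : nat := (w^-1)%g x.

Definition inv_set (m : nat) (X : {set 'I_n}) : bool :=
  (#|X| == m) && sorted (fun a b => pos b < pos a) (enum X).

Definition inv_pair (a b : 'I_n) : bool := pos b < pos a.

Definition quasi_inv (X : {set 'I_n}) : bool :=
  #|[set p : 'I_n * 'I_n | [&& p.1 \in X, p.2 \in X, p.1 < p.2 & ~~ inv_pair p.1 p.2]]| == 1.

(* X_i : X with its i-th smallest element x_i removed (1 <= i <= |X|) *)
Definition del (X : {set 'I_n}) (i : nat) : {set 'I_n} :=
  [set x in X | index x (enum X) != i.-1].

Definition Pset (X : {set 'I_n}) : {set {set 'I_n}} := [set X :\ x | x in X].

Definition qrel (m : nat) (A B : {set 'I_n}) : Prop :=
  exists (X : {set 'I_n}) (i : nat),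
    [/\ #|X| = m.+1, quasi_inv X, 1 <= i <= m,
        [set Y in Pset X | inv_set m Y] = [set del X i; del X i.+1] &
        (if odd (m - i) then A = del X i /\ B = del X i.+1
                        else A = del X i.+1 /\ B = del X i)].

Definition Ple (m : nat) (A B : {set 'I_n}) : Prop :=
  inv_set m A /\ inv_set m B /\ clos_refl_trans _ (qrel m) A B.

Definition is_prefix (X : {set 'I_n}) (S : {set {set 'I_n}}) : Prop :=
  exists i : nat, forall Y, Y \in S <-> exists j, [/\ i <= j, 1 <= j, j <= #|X| & Y = del X j].

Definition is_suffix (X : {set 'I_n}) (S : {set {set 'I_n}}) : Prop :=
  exists i : nat, forall Y, Y \in S <-> exists j, [/\ 1 <= j, j <= i, j <= #|X| & Y = del X j].

Definition lower_ideal (m : nat) (R : {set {set 'I_n}}) : Prop :=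
  (forall Y, Y \in R -> inv_set m Y) /\
  (forall Y Z, Y \in R -> Ple m Z Y -> Z \in R).

Definition consistent (k : nat) (R : {set {set 'I_n}}) : Prop :=
  lower_ideal k.+1 R /\
  (forall X, inv_set k.+2 X -> is_prefix X (Pset X :&: R) \/ is_suffix X (Pset X :&: R)).

Definition GR_edge (k : nat) (R : {set {set 'I_n}}) (A B : {set 'I_n}) : Prop :=
  [/\ inv_set k A, inv_set k B &
   [\/ qrel k A B,
       exists X i, [/\ X \in R, 1 <= i <= k & A = del X i /\ B = del X i.+1] |
       exists X i, [/\ inv_set k.+1 X, X \notin R, 1 <= i <= k &
                       A = del X i.+1 /\ B = del X i]]].

Definition GR_acyclic (k : nat) (R : {set {set 'I_n}}) : Prop :=
  forall A, ~ clos_trans _ (GR_edge k R) A A.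

End QuasiInv.

(* Main.v *)
Require Import Defs.
From Stdlib Require Import Relations.
From mathcomp Require Import all_boot all_order all_fingroup.
From mathcomp Require Import zify.
Set Implicit Arguments. Unset Strict Implicit. Unset Printing Implicit Defensive.

Section Aux.
Variable n : nat.
Implicit Types (X Y Z A B C : {set 'I_n}) (x y t : 'I_n).

Definition ltord : rel 'I_n := fun a b => a < b.
Lemma ltord_trans : transitive ltord.
Proof. by move=> a b c; rewrite /ltord; apply: ltn_trans. Qed.

Lemma enumXE X : enum X = [seq x <- enum 'I_n | x \in X].
Proof. by rewrite enumT. Qed.

Lemma enum_sorted X : sorted ltord (enum X).
Proof.
rewrite enumXE; apply: sorted_filter; first exact: ltord_trans.
have := iota_ltn_sorted 0 n; rewrite -val_enum_ord sorted_map.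
by [].
Qed.

Lemma index_count (s : seq 'I_n) x : sorted ltord s -> x \in s ->
  index x s = count (fun y => y < x) s.
Proof.
elim: s => [|y s IH] //= Hs.
rewrite in_cons => /orP [/eqP ->|Hx]; rewrite ?eqxx /=.
  rewrite ltnn /=; apply/esym/eqP; rewrite -leqn0 leqNgt -has_count.
  apply/hasP => [[z Hz]] /= Hzy.
  have : ltord y z by move: (order_path_min ltord_trans Hs) => /allP; apply.
  by rewrite /ltord ltnNge (ltnW Hzy).
have Hyx : y < x by move: (order_path_min ltord_trans Hs) => /allP; apply.
have -> : (y == x) = false by apply/negbTE; rewrite neq_ltn Hyx.
by rewrite Hyx IH // (path_sorted Hs).
Qed.

Definition rk X x := #|[set y in X | y < x]|.

Lemma rk_count X x : rk X x = count (fun y => y < x) (enum X).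
Proof.
rewrite /rk -size_filter.
have -> : #|[set y in X | y < x]| = #|[seq y : 'I_n <- enum X | y < x]|.
  by apply: eq_card => y; rewrite inE mem_filter mem_enum andbC.
by apply/card_uniqP; rewrite filter_uniq // enum_uniq.
Qed.

Lemma index_rk X x : x \in X -> index x (enum X) = rk X x.
Proof. by move=> Hx; rewrite rk_count index_count ?mem_enum // enum_sorted. Qed.


Lemma rk_lt X x y : x \in X -> x < y -> rk X x < rk X y.
Proof.
move=> Hx Hxy; apply: proper_card; apply/properP; split.
  by apply/subsetP => z; rewrite !inE => /andP [-> /ltn_trans]; apply.
by exists x; rewrite !inE ?Hx ?Hxy ?ltnn.
Qed.

Lemma rk_inj X x y : x \in X -> y \in X -> rk X x = rk X y -> x = y.
Proof.
move=> Hx Hy E; case: (ltngtP x y) => H.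
- by have := rk_lt Hx H; rewrite E ltnn.
- by have := rk_lt Hy H; rewrite E ltnn.
- exact: val_inj.
Qed.

Lemma rk_ltI X x y : x \in X -> y \in X -> rk X x < rk X y -> x < y.
Proof.
move=> Hx Hy H; case: (ltngtP x y) => // H'.
- by have := rk_lt Hy H'; rewrite ltnNge (ltnW H).
- by move: H; rewrite (val_inj H') ltnn.
Qed.

Lemma rk_ltcard X x : x \in X -> rk X x < #|X|.
Proof.
move=> Hx; apply: proper_card; apply/properP; split.
  by apply/subsetP => z; rewrite !inE => /andP [].
by exists x; rewrite ?inE ?Hx ?ltnn.
Qed.

Lemma size_enumX X : size (enum X) = #|X|.
Proof. by rewrite cardE. Qed.

Lemma rk_surj X j : j < #|X| -> exists2 x, x \in X & rk X x = j.
Proof.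
move=> Hj; case: (pickP (mem X)) => [x0 Hx0|H0]; last first.
  by move: Hj; rewrite (eq_card0 H0).
exists (nth x0 (enum X) j); first by rewrite -mem_enum mem_nth // size_enumX.
rewrite -index_rk; last by rewrite -mem_enum mem_nth // size_enumX.
by rewrite index_uniq ?enum_uniq // size_enumX.
Qed.

Lemma rk_max X t : t \in X -> (forall x, x \in X -> x <= t) -> rk X t = #|X|.-1.
Proof.
move=> Ht Hm; rewrite (cardsD1 t X) Ht /= /rk; apply: eq_card => y.
rewrite !inE ltn_neqAle andbC; case Hy: (y \in X); rewrite ?andbF //=.
by rewrite Hm // !andbT val_eqE.
Qed.

Lemma delE X i x : x \in X -> rk X x = i.-1 -> del X i = X :\ x.
Proof.
move=> Hx Hr; apply/setP => y; rewrite /del !inE.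
case Hy: (y \in X); rewrite ?andbF ?andbT //.
rewrite index_rk // -Hr; apply/idP/idP.
  by apply: contra => /eqP ->.
by apply: contra => /eqP /(rk_inj Hy Hx) ->.
Qed.

Lemma del_ex X i : 0 < i <= #|X| ->
  exists2 x, x \in X & rk X x = i.-1 /\ del X i = X :\ x.
Proof.
case/andP => Hi1 Hi2; have [x Hx Hr] : exists2 x, x \in X & rk X x = i.-1.
  by apply: rk_surj; rewrite prednK.
by exists x => //; split => //; apply: delE.
Qed.

Lemma del_inj X a b : 0 < a <= #|X| -> 0 < b <= #|X| -> del X a = del X b -> a = b.
Proof.
move=> Ha Hb; have [x Hx [Hrx ->]] := del_ex Ha; have [y Hy [Hry ->]] := del_ex Hb.
move=> E; have Exy : x = y.
  apply/eqP; apply/negPn/negP => Hne.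
  by move: E => /setP /(_ x); rewrite !inE eqxx Hx (negbTE Hne).
move: Hrx Hry; rewrite Exy => -> Hy'.
by case/andP: Ha => Ha _; case/andP: Hb => Hb _; rewrite -(prednK Ha) -(prednK Hb) Hy'.
Qed.

Lemma card_del X i : 0 < i <= #|X| -> #|del X i| = #|X|.-1.
Proof. by move=> Hi; have [x Hx [_ ->]] := del_ex Hi; rewrite (cardsD1 x X) Hx. Qed.

Lemma del_sub X i : del X i \subset X.
Proof. by apply/subsetP => y; rewrite !inE => /andP []. Qed.

Lemma mem_Pset X Y : (Y \in Pset X) <-> exists j, 0 < j <= #|X| /\ Y = del X j.
Proof.
split.
  case/imsetP => x Hx ->; exists (rk X x).+1; split.
    by rewrite /= rk_ltcard.
  by rewrite (delE Hx).
case=> j [Hj ->]; have [x Hx [_ ->]] := del_ex Hj.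
by apply/imsetP; exists x.
Qed.

Lemma del_Pset X j : 0 < j <= #|X| -> del X j \in Pset X.
Proof. by move=> Hj; apply/mem_Pset; exists j. Qed.

Lemma del_top X t : t \in X -> (forall x, x \in X -> x <= t) -> del X #|X| = X :\ t.
Proof.
move=> Ht Hm; apply: delE => //; exact: rk_max.
Qed.

Lemma del_notin X t j : t \in X -> (forall x, x \in X -> x <= t) ->
  0 < j <= #|X| -> t \notin del X j -> j = #|X|.
Proof.
move=> Ht Hm Hj; have [x Hx [Hr ->]] := del_ex Hj.
rewrite !inE Ht andbT negbK => /eqP Etx; move: Hr; rewrite -Etx (rk_max Ht Hm).
case/andP: Hj => Hj1 Hj2 E.
have H0 : 0 < #|X| by apply: leq_trans Hj2.
by rewrite -(prednK Hj1) -(prednK H0) E.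
Qed.

Definition below t X := forall x, x \in X -> x < t.

Lemma rk_add X t x : below t X -> x \in X -> rk (t |: X) x = rk X x.
Proof.
move=> Hb Hx; rewrite /rk; apply: eq_card => y; rewrite !inE.
case: eqP => [->|] //=; rewrite ltnNge ltnW ?andbF //; exact: Hb.
Qed.

Lemma notin_below X t : below t X -> t \notin X.
Proof. by move=> Hb; apply/negP => /Hb; rewrite ltnn. Qed.

Lemma card_add X t : below t X -> #|t |: X| = #|X|.+1.
Proof. by move=> Hb; rewrite cardsU1 (notin_below Hb). Qed.

Lemma del_add X t j : below t X -> 0 < j <= #|X| -> del (t |: X) j = t |: del X j.
Proof.
move=> Hb Hj; have [x Hx [Hr ->]] := del_ex Hj.
rewrite (@delE _ _ x); first last.
- by rewrite rk_add.
- by rewrite !inE Hx orbT.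
apply/setP => y; rewrite !inE; case: (eqP (x:=y) (y:=t)) => [->|] //=.
by rewrite andbT; apply/negP => /eqP Etx; move: (Hb _ Hx); rewrite -Etx ltnn.
Qed.

Lemma del_add_top X t : below t X -> del (t |: X) #|X|.+1 = X.
Proof.
move=> Hb; rewrite (@delE _ _ t); first last.
- rewrite /= (@rk_max _ t) ?card_add // ?setU11 // => x; rewrite !inE.
  by case/orP => [/eqP ->|/Hb /ltnW].
- by rewrite setU11.
apply/setP => y; rewrite !inE; case: eqP => [->|] /=.
  by rewrite (negbTE (notin_below Hb)).
by [].
Qed.

Lemma setU1K' X t : t \notin X -> (t |: X) :\ t = X.
Proof.
move=> Ht; apply/setP => y; rewrite !inE; case: eqP => [->|] //=.
by rewrite (negbTE Ht).
Qed.

Lemma setD1K' X t : t \in X -> t |: (X :\ t) = X.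
Proof. by move=> Ht; rewrite setD1K. Qed.
End Aux.

Section Inv.
Variable n : nat.
Variable w : 'S_n.
Implicit Types (X Y Z A B C : {set 'I_n}) (x y t : 'I_n).

Definition invP X := forall a b, a \in X -> b \in X -> a < b -> pos w b < pos w a.
Definition tinv t X := forall x, x \in X -> pos w t < pos w x.

Lemma pos_inj : injective (pos w).
Proof. by move=> a b /val_inj /perm_inj. Qed.

Definition rinv : rel 'I_n := fun a b => pos w b < pos w a.
Lemma rinv_trans : transitive rinv.
Proof. by move=> a b c; rewrite /rinv => H1 H2; apply: ltn_trans H2 H1. Qed.

Lemma inv_setP m X : inv_set w m X <-> #|X| = m /\ invP X.
Proof.
rewrite /inv_set; split.
  case/andP => /eqP -> Hs; split => // a b Ha Hb Hab.
  have := sorted_ltn_index rinv_trans Hs; rewrite /rinv; apply; rewrite ?mem_enum //.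
  by rewrite !index_rk // rk_lt.
case=> -> Hi; rewrite eqxx /=.
apply: (@sub_in_sorted _ (mem X) (@ltord n)).
- by move=> a b Ha Hb; apply: Hi.
- by apply/allP => y; rewrite mem_enum.
- exact: enum_sorted.
Qed.

Lemma invP_sub X Y : Y \subset X -> invP X -> invP Y.
Proof. by move=> /subsetP H Hi a b Ha Hb; apply: Hi; apply: H. Qed.

Lemma inv_del m X j : inv_set w m.+1 X -> 0 < j <= #|X| -> inv_set w m (del X j).
Proof.
move=> /inv_setP [Hc Hi] Hj; apply/inv_setP; split.
  by rewrite card_del // Hc.
exact: invP_sub (del_sub X j) Hi.
Qed.

Lemma invP_add X t : below t X -> tinv t X -> invP (t |: X) <-> invP X.
Proof.
move=> Hb Ht; split.
  by apply: invP_sub; apply/subsetP => y Hy; rewrite !inE Hy orbT.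
move=> Hi a b; rewrite !inE => /orP [/eqP ->|Ha] /orP [/eqP ->|Hb'].
- by rewrite ltnn.
- by move=> H; move: (Hb _ Hb'); rewrite ltnNge (ltnW H).
- by move=> _; apply: Ht.
- exact: Hi.
Qed.

Lemma inv_add m X t : below t X -> tinv t X -> inv_set w m.+1 (t |: X) = inv_set w m X.
Proof.
move=> Hb Ht; apply/idP/idP.
  by case/inv_setP => Hc Hi; apply/inv_setP; split; [move: Hc; rewrite card_add // => -[]
    | exact/(invP_add Hb Ht)].
case/inv_setP => Hc Hi; apply/inv_setP; split; [by rewrite card_add // Hc
    | exact/(invP_add Hb Ht)].
Qed.

Lemma tinv_of X t : invP (t |: X) -> below t X -> tinv t X.
Proof.
move=> Hi Hb x Hx; apply: Hi; rewrite ?inE ?eqxx ?Hx ?orbT //; exact: Hb.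
Qed.

Definition bad X := [set p : 'I_n * 'I_n | p.1 \in X & [&& p.2 \in X, p.1 < p.2 & ~~ Defs.inv_pair w p.1 p.2]].

Lemma quasiE X : quasi_inv w X = (#|bad X| == 1).
Proof. by []. Qed.

Lemma quasi_not_inv X : quasi_inv w X -> ~ invP X.
Proof.
rewrite quasiE => /cards1P [p Hp] Hi.
have : p \in bad X by rewrite Hp set11.
rewrite !inE => /and4P [H1 H2 H3]; rewrite /Defs.inv_pair.
by rewrite (Hi _ _ H1 H2 H3).
Qed.

Lemma bad_add X t : below t X -> tinv t X -> bad (t |: X) = bad X.
Proof.
move=> Hb Ht; apply/setP => -[a b]; rewrite !inE /=.
have HtX := notin_below Hb.
case: (a =P t) => [->|Ha] /=.
  rewrite (negbTE HtX) /=.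
  case: (b =P t) => [->|Hb'] /=; first by rewrite ltnn.
  case Hbx: (b \in X) => //=; move: (Hb _ Hbx) => Hlt.
  by rewrite ltnNge (ltnW Hlt).
case: (b =P t) => [->|Hb'] /=; last by [].
rewrite (negbTE HtX) /=; case Hax: (a \in X) => //=.
by rewrite /Defs.inv_pair Ht // !andbF.
Qed.

Lemma quasi_add X t : below t X -> tinv t X -> quasi_inv w (t |: X) = quasi_inv w X.
Proof. by move=> Hb Ht; rewrite !quasiE bad_add. Qed.

Lemma del_eq X a b : 0 < a <= #|X| -> 0 < b <= #|X| -> (del X a == del X b) = (a == b).
Proof.
move=> Ha Hb; apply/eqP/eqP => [|-> //]; exact: del_inj.
Qed.

Lemma pset_good X m i : 0 < i -> i.+1 <= #|X| ->
  [set Y in Pset X | inv_set w m Y] = [set del X i; del X i.+1] <->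
  (forall j, 0 < j <= #|X| -> inv_set w m (del X j) = (j == i) || (j == i.+1)).
Proof.
move=> Hi Hi1.
have Hia : 0 < i <= #|X| by rewrite Hi ltnW.
have Hib : 0 < i.+1 <= #|X| by rewrite Hi1.
split.
  move=> E j Hj; move: E => /setP /(_ (del X j)); rewrite !inE del_Pset //= => ->.
  by rewrite !del_eq.
move=> H; apply/setP => Y; rewrite !inE.
case HY: (Y \in Pset X) => /=.
  case/mem_Pset: HY => j [Hj ->]; rewrite H // !del_eq //.
apply/esym/negbTE; apply/negP => /orP [] /eqP E; move: HY; rewrite E del_Pset //.
Qed.

Lemma delU X a b : 0 < a <= #|X| -> 0 < b <= #|X| -> a != b -> del X a :|: del X b = X.
Proof.
move=> Ha Hb Hab; have [x Hx [Hrx Ex]] := del_ex Ha; have [y Hy [Hry Ey]] := del_ex Hb.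
have Hxy : x != y.
  apply/negP => /eqP Exy; move: Hab; rewrite -(del_eq Ha Hb) Ex Ey Exy eqxx //.
rewrite Ex Ey; apply/setP => z; rewrite !inE.
case Hz: (z \in X); rewrite ?andbF ?andbT //=.
by case: (z =P x) => [->|] //=; rewrite Hxy.
Qed.

Lemma qrel_X m Z Y X i : #|X| = m.+1 -> 0 < i <= m ->
  (if odd (m - i) then Z = del X i /\ Y = del X i.+1 else Z = del X i.+1 /\ Y = del X i) ->
  X = Z :|: Y.
Proof.
move=> Hc /andP [Hi1 Him] Hor.
have Ha : 0 < i <= #|X| by rewrite Hc; apply/andP; split; lia.
have Hb : 0 < i.+1 <= #|X| by rewrite Hc; apply/andP; split; lia.
have Hne : i != i.+1 by rewrite neq_ltn ltnSn.
case: ifP Hor => _ [-> ->]; first by rewrite delU.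
by rewrite setUC delU.
Qed.

Lemma oddSub m i : i <= m -> odd (m.+1 - i) = ~~ odd (m - i).
Proof. by move=> H; rewrite subSn // oddS. Qed.

Lemma qrel_lift m Z Y t : below t (Z :|: Y) -> tinv t (Z :|: Y) ->
  qrel w m Z Y -> qrel w m.+1 (t |: Y) (t |: Z).
Proof.
move=> Hb Ht [X [i [HcX Hq Hi HP Hor]]].
have EX := qrel_X HcX Hi Hor; rewrite -EX in Hb Ht.
case/andP: Hi => Hi1 Him.
have Hia : 0 < i <= #|X| by rewrite HcX; apply/andP; split; lia.
have Hib : 0 < i.+1 <= #|X| by rewrite HcX; apply/andP; split; lia.
have Hgood := (proj1 (pset_good m Hi1 (proj2 (andP Hib)))) HP.
exists (t |: X), i; split.
- by rewrite card_add // HcX.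
- by rewrite quasi_add.
- by apply/andP; split; lia.
- apply/pset_good => //; first by rewrite card_add // HcX; lia.
  move=> j; rewrite card_add // => /andP [Hj1 Hj2].
  case: (ltngtP j #|X|.+1) Hj2 => // [Hlt|->] _.
    have Hj : 0 < j <= #|X| by rewrite Hj1 -ltnS.
    rewrite del_add // inv_add ?Hgood //.
    + move=> x /(subsetP (del_sub X j)); exact: Hb.
    + move=> x /(subsetP (del_sub X j)); exact: Ht.
  rewrite del_add_top // HcX.
  have -> : (m.+2 == i) = false by apply/negbTE; apply/eqP; lia.
  have -> : (m.+2 == i.+1) = false by apply/negbTE; apply/eqP; lia.
  apply/negbTE/negP => /inv_setP [_ Hi']; exact: (quasi_not_inv Hq Hi').
- rewrite !del_add // oddSub //.
  by case: (odd (m - i)) Hor => /= -[-> ->].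
Qed.

Lemma qrel_drop m A B t : t \in A -> t \in B -> (forall x, x \in A :|: B -> x <= t) ->
  invP A -> invP B -> qrel w m.+1 A B -> qrel w m (B :\ t) (A :\ t).
Proof.
move=> HtA HtB Hm HiA HiB [X [i [HcX Hq Hi HP Hor]]].
have EX := qrel_X HcX Hi Hor; rewrite -EX in Hm.
have HtX : t \in X by rewrite EX inE HtA.
set X' := X :\ t.
have Hb : below t X'.
  move=> x; rewrite !inE => /andP [Hxt HxX]; rewrite ltn_neqAle Hm // andbT.
  by rewrite val_eqE.
have Ht : tinv t X'.
  move=> x Hx; have Hxt := Hb _ Hx; move: Hx; rewrite !inE => /andP [_].
  rewrite EX inE => /orP [] Hx.
  - exact: HiA.
  - exact: HiB.
have EX' : X = t |: X' by rewrite setD1K.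
have HcX' : #|X'| = m.+1 by move: HcX; rewrite EX' card_add // => -[].
case/andP: Hi => Hi1 Him.
have Hia : 0 < i <= #|X| by rewrite HcX; apply/andP; split; lia.
have Hib : 0 < i.+1 <= #|X| by rewrite HcX; apply/andP; split; lia.
have Hgood := (proj1 (pset_good m.+1 Hi1 (proj2 (andP Hib)))) HP.
have Him' : i <= m.
  have Htop := del_top HtX Hm.
  have Hti1 : t \in del X i.+1 by case: (odd (m.+1 - i)) Hor => -[EA EB]; [rewrite -EB | rewrite -EA].
  case: (ltngtP i m) => // Hmi.
  by move: Hti1; rewrite (_ : i.+1 = #|X|) ?Htop ?setD11 //; rewrite HcX; lia.
have Hia' : 0 < i <= #|X'| by rewrite HcX'; apply/andP; split; lia.
have Hib' : 0 < i.+1 <= #|X'| by rewrite HcX'; apply/andP; split; lia.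
have HtX' : t \notin X' by rewrite !inE eqxx.
have Hdel : forall j, 0 < j <= #|X'| -> del X j :\ t = del X' j.
  move=> j Hj; rewrite EX' del_add // setU1K' //.
  by apply/negP => /(subsetP (del_sub X' j)); apply/negP.
exists X', i; split => //.
- by move: (quasi_add Hb Ht); rewrite -EX' Hq.
- by apply/andP; split.
- apply/(pset_good m Hi1 (proj2 (andP Hib'))).
  move=> j Hj.
  have Hj' : 0 < j <= #|X| by rewrite HcX; rewrite HcX' in Hj; lia.
  rewrite -(inv_add _ (fun x Hx => Hb x (subsetP (del_sub X' j) x Hx))
                      (fun x Hx => Ht x (subsetP (del_sub X' j) x Hx))).
  by rewrite -del_add // -EX' Hgood.
- have Ho : odd (m.+1 - i) = ~~ odd (m - i) by rewrite oddSub.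
  rewrite Ho in Hor; rewrite -!Hdel //.
  by case: (odd (m - i)) Hor => /= -[-> ->].
Qed.

End Inv.


Lemma bnd_i k i : 0 < i <= k -> 0 < i <= k.+1.
Proof. lia. Qed.
Lemma bnd_iS k i : 0 < i <= k -> 0 < i.+1 <= k.+1.
Proof. lia. Qed.
Lemma neq_iS i : i != i.+1.
Proof. lia. Qed.

Lemma lt_pred_false i : i < i.-1 -> False.
Proof. lia. Qed.

Lemma lt_le_pred j i0 : j < i0 -> j <= i0.-1.
Proof. lia. Qed.
Lemma le_pred_lt j i0 : 0 < j -> j <= i0.-1 -> j < i0.
Proof. lia. Qed.

Section Main.
Variable n : nat.
Variable w : 'S_n.
Implicit Types (X Y Z A B C S : {set 'I_n}) (x y t : 'I_n) (R : {set {set 'I_n}}).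

Lemma delU_i X i k : #|X| = k.+1 -> 0 < i <= k -> del X i :|: del X i.+1 = X.
Proof. by move=> Hc Hi; apply: delU; rewrite ?Hc; [exact: bnd_i | exact: bnd_iS | exact: neq_iS]. Qed.

Definition edgeS S k R A B := GR_edge w k R A B /\ A \subset S /\ B \subset S.

Definition consS S k R :=
  [/\ (forall Y, Y \in R -> inv_set w k.+1 Y),
      (forall Y Z, Y \in R -> qrel w k.+1 Z Y -> Z :|: Y \subset S -> Z \in R) &
      (forall X, inv_set w k.+2 X -> X \subset S ->
         is_prefix X (Pset X :&: R) \/ is_suffix X (Pset X :&: R))].

Lemma prefix_up Y P j j' : is_prefix Y P -> del Y j \in P -> 0 < j -> j <= j' -> j' <= #|Y| ->
  del Y j' \in P.
Proof.
move=> [i0 H] Hj Hj0 Hjj' Hj'Y.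
have HjY : j <= #|Y| by apply: leq_trans Hj'Y.
case/H: Hj => j0 [Hi0 Hj01 Hj0Y E].
have Ej : j = j0 by apply: (del_inj (X:=Y)) => //; apply/andP; split.
apply/H; exists j'; split => //; [lia | lia].
Qed.

Lemma suffix_down Y P j j' : is_suffix Y P -> del Y j \in P -> 0 < j' -> j' <= j -> j <= #|Y| ->
  del Y j' \in P.
Proof.
move=> [i0 H] Hj Hj0 Hjj' HjY.
case/H: Hj => j0 [Hj01 Hi0 Hj0Y E].
have Ej : j = j0 by apply: (del_inj (X:=Y)) => //; apply/andP; split => //; lia.
apply/H; exists j'; split => //; lia.
Qed.

Lemma qrel_inv m Z Y : qrel w m Z Y -> inv_set w m Z /\ inv_set w m Y.
Proof.
move=> [X [i [_ _ _ HP Hor]]].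
have HZ : forall V, V \in [set del X i; del X i.+1] -> inv_set w m V.
  by move=> V; rewrite -HP inE => /andP [].
by case: ifP Hor => _ [-> ->]; split; apply: HZ; rewrite !inE eqxx ?orbT.
Qed.

Lemma edge_X k R A B : GR_edge w k R A B -> (forall Y, Y \in R -> inv_set w k.+1 Y) ->
  exists X, [/\ #|X| = k.+1, X = A :|: B &
    exists a b, [/\ 0 < a <= #|X|, 0 < b <= #|X|, A = del X a & B = del X b]].
Proof.
move=> [HA HB []].
- move=> Hq; have [X [i [Hc _ Hi _ Hor]]] := Hq.
  exists X; split => //; first exact: qrel_X Hor.
  case/andP: Hi => Hi1 Hik.
  case: ifP Hor => _ [-> ->].
    by exists i, i.+1; split => //; rewrite Hc; apply/andP; split; lia.
  by exists i.+1, i; split => //; rewrite Hc; apply/andP; split; lia.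
- move=> [X [i [HX /andP [Hi1 Hik] [-> ->]]]] HR.
  have /inv_setP [Hc _] := HR _ HX.
  exists X; split => //; first by rewrite delU // ?Hc; [apply/andP; split; lia | apply/andP; split; lia | apply/eqP; lia].
  by exists i, i.+1; split => //; rewrite Hc; apply/andP; split; lia.
- move=> [X [i [HX _ /andP [Hi1 Hik] [-> ->]]]] HR.
  have /inv_setP [Hc _] := HX.
  exists X; split => //; first by rewrite delU // ?Hc; [apply/andP; split; lia | apply/andP; split; lia | apply/eqP; lia].
  by exists i.+1, i; split => //; rewrite Hc; apply/andP; split; lia.
Qed.


Section Fix.
Variables (S : {set 'I_n}) (t : 'I_n) (k : nat) (R : {set {set 'I_n}}).
Hypothesis HtS : t \in S.
Hypothesis Hmax : forall x, x \in S -> x <= t.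
Hypothesis HC : consS S k R.

Lemma below_of A : A \subset S -> t \notin A -> below t A.
Proof.
move=> /subsetP HA HtA x Hx; rewrite ltn_neqAle Hmax ?HA // andbT.
by apply/negP => /eqP /val_inj Ex; move: HtA; rewrite -Ex Hx.
Qed.

Lemma R1 Y : Y \in R -> inv_set w k.+1 Y.
Proof. by case: HC => H _ _; apply: H. Qed.

Lemma max_of X : X \subset S -> forall x, x \in X -> x <= t.
Proof. by move=> /subsetP H x /H /Hmax. Qed.

Lemma del_same X j b p : 0 < j <= #|X| -> 0 < b <= #|X| -> p = del X j -> p = del X b -> j = b.
Proof. by move=> Hj Hb E1 E2; apply: (del_inj Hj Hb); rewrite -E1 -E2. Qed.

Lemma F1 u p : edgeS S k R u p -> t \in u -> t \notin p -> t |: p \in R.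
Proof.
move=> [He [Hu Hp]] Htu Htp.
have [X [HcX EX [a [b [Ha Hb Ea Eb]]]]] := edge_X He R1.
have HXS : X \subset S by rewrite EX subUset Hu Hp.
have HtX : t \in X by rewrite EX inE Htu.
have Hm := max_of HXS.
have Eb' : b = #|X| by apply: (del_notin HtX Hm Hb); rewrite -Eb.
have Ep : p = X :\ t by rewrite Eb Eb' (del_top HtX Hm).
case: He => _ _ [].
- move=> [X' [i [HcX' Hq /andP [Hi1 Hik] HP Hor]]].
  have EX' := qrel_X HcX' (introT andP (conj Hi1 Hik)) Hor.
  have EXX : X' = X by rewrite EX' EX.
  rewrite EXX in Hor HcX'.
  have Hb1 : 0 < i.+1 <= #|X| by rewrite HcX' bnd_iS // Hi1 Hik.
  have Hb0 : 0 < i <= #|X| by rewrite HcX' bnd_i // Hi1 Hik.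
  case: ifP Hor => Hodd [E1 E2].
    have := del_same Hb1 Hb E2 Eb; rewrite Eb' HcX => -[Eik].
    by move: Hodd; rewrite Eik subnn.
  have := del_same Hb0 Hb E2 Eb; rewrite Eb' HcX => Eik.
  by move: Hik; rewrite Eik ltnn.
- move=> [X' [i [HX' /andP [Hi1 Hik] [E1 E2]]]].
  have /inv_setP [Hc _] := R1 HX'.
  have EX' : X' = X.
    by rewrite EX E1 E2 ?(setUC (del X' i.+1)) (delU_i Hc) // Hi1 Hik.
  by rewrite Ep setD1K // -EX'.
- move=> [X' [i [HX' HX'R /andP [Hi1 Hik] [E1 E2]]]].
  have /inv_setP [Hc _] := HX'.
  have EX' : X' = X.
    by rewrite EX E1 E2 ?(setUC (del X' i.+1)) (delU_i Hc) // Hi1 Hik.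
  rewrite EX' in E2 Hc.
  have Hb0 : 0 < i <= #|X| by rewrite Hc bnd_i // Hi1 Hik.
  have := del_same Hb0 Hb E2 Eb; rewrite Eb' Hc => Eik.
  by move: Hik; rewrite Eik ltnn.
Qed.

Lemma F2 p u : edgeS S k R p u -> t \notin p -> t \in u -> t |: p \notin R.
Proof.
move=> [He [Hp Hu]] Htp Htu.
have [X [HcX EX [a [b [Ha Hb Ea Eb]]]]] := edge_X He R1.
have HXS : X \subset S by rewrite EX subUset Hu Hp.
have HtX : t \in X by rewrite EX inE Htu orbT.
have Hm := max_of HXS.
have Ea' : a = #|X| by apply: (del_notin HtX Hm Ha); rewrite -Ea.
have Ep : t |: p = X by rewrite Ea Ea' (del_top HtX Hm) setD1K.
rewrite Ep.
case: He => _ _ [].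
- move=> [X' [i [HcX' Hq /andP [Hi1 Hik] HP Hor]]].
  have EX' := qrel_X HcX' (introT andP (conj Hi1 Hik)) Hor.
  have EXX : X' = X by rewrite EX' EX.
  rewrite EXX in Hq.
  apply/negP => /R1 /inv_setP [_ Hi]; exact: (quasi_not_inv Hq Hi).
- move=> [X' [i [HX' /andP [Hi1 Hik] [E1 E2]]]].
  have /inv_setP [Hc _] := R1 HX'.
  have EX' : X' = X.
    by rewrite EX E1 E2 ?(setUC (del X' i.+1)) (delU_i Hc) // Hi1 Hik.
  rewrite EX' in E1 Hc.
  have Hb0 : 0 < i <= #|X| by rewrite Hc bnd_i // Hi1 Hik.
  have := del_same Hb0 Ha E1 Ea; rewrite Ea' Hc => Eik.
  by move: Hik; rewrite Eik ltnn.
- move=> [X' [i [HX' HX'R /andP [Hi1 Hik] [E1 E2]]]].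
  have /inv_setP [Hc _] := HX'.
  have EX' : X' = X.
    by rewrite EX E1 E2 ?(setUC (del X' i.+1)) (delU_i Hc) // Hi1 Hik.
  by rewrite -EX'.
Qed.

Lemma R2 Y Z : Y \in R -> qrel w k.+1 Z Y -> Z :|: Y \subset S -> Z \in R.
Proof. by case: HC => _ H _; apply: H. Qed.

Lemma R3 X : inv_set w k.+2 X -> X \subset S ->
  is_prefix X (Pset X :&: R) \/ is_suffix X (Pset X :&: R).
Proof. by case: HC => _ _ H; apply: H. Qed.

Lemma inPR X j : 0 < j <= #|X| -> (del X j \in Pset X :&: R) = (del X j \in R).
Proof. by move=> Hj; rewrite inE del_Pset. Qed.

Lemma tinv_ext X p xa : tinv w t p -> p = X :\ xa -> pos w t < pos w xa -> tinv w t X.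
Proof.
move=> Ht Ep Ha x Hx; case: (x =P xa) => [->|Hne] //.
by apply: Ht; rewrite Ep !inE Hx andbT; apply/eqP.
Qed.

Lemma memD1 X x y : y \in X -> y != x -> y \in X :\ x.
Proof. by move=> Hy Hne; rewrite !inE Hy Hne. Qed.

Lemma F3q p q : inv_set w k p -> inv_set w k q -> qrel w k p q -> p \subset S -> q \subset S ->
  t \notin p -> t \notin q -> t |: p \in R -> t |: q \in R.
Proof.
move=> /inv_setP [Hcp HiP] /inv_setP [Hcq HiQ] Hqr Hp Hq Htp Htq HpR.
have Hbp : below t p := below_of Hp Htp.
have Htinvp : tinv w t p.
  by have /inv_setP [_ Hi] := R1 HpR; apply: tinv_of.
have [X [i [HcX Hqu Hi HP Hor]]] := Hqr.
have EX := qrel_X HcX Hi Hor.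
have HXS : X \subset S by rewrite EX subUset Hp Hq.
have HtX : t \notin X by rewrite EX inE negb_or Htp Htq.
have HbX := below_of HXS HtX.
have Hb1 : 0 < i.+1 <= #|X| by rewrite HcX bnd_iS.
have Hb0 : 0 < i <= #|X| by rewrite HcX bnd_i.
have [jp [jq [Hjp Hjq Ep Eq Hrel]]] : exists jp jq, [/\ 0 < jp <= #|X|, 0 < jq <= #|X|,
     p = del X jp, q = del X jq & (if odd (k - i) then jp = i /\ jq = i.+1 else jp = i.+1 /\ jq = i)].
  by case: ifP Hor => Ho [-> ->]; [exists i, i.+1 | exists i.+1, i].
have [xa Hxa [Hra Exa]] := del_ex Hjp.
have [xb Hxb [Hrb Exb]] := del_ex Hjq.
rewrite Exa in Ep; rewrite Exb in Eq.
have Hjne : jp != jq by case: ifP Hrel => _ [-> ->]; rewrite ?neq_iS // eq_sym neq_iS.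
have Hab : xa != xb.
  apply/negP => /eqP Eab; move: Hra; rewrite Eab Hrb => E.
  case/andP: Hjp => Hjp1 _; case/andP: Hjq => Hjq1 _.
  by move: Hjne; rewrite -(prednK Hjp1) -(prednK Hjq1) E eqxx.
have Hta : pos w t < pos w xa.
  case: (ltngtP xa xb) => Hlt; last by move/val_inj: Hlt => E; move: Hab; rewrite E eqxx.
  + case Ey: [exists y in X, (xa < y) && (y != xb)].
      case/existsP: Ey => y /andP [HyX /andP [Hay Hyb]].
      have Hya : y != xa by rewrite neq_ltn Hay orbT.
      have Hyq : y \in q by rewrite Eq memD1.
      have Hyp : y \in p by rewrite Ep memD1.
      have Haq : xa \in q by rewrite Eq memD1.
      by apply: ltn_trans (Htinvp _ Hyp) (HiQ _ _ Haq Hyq Hay).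
    exfalso; move/negbT: Ey; rewrite negb_exists => /forallP Hy.
    have Hmb : forall y, y \in X -> y <= xb.
      move=> y HyX; move: (Hy y); rewrite HyX /= negb_and -leqNgt negbK.
      case/orP => [Hya|/eqP -> //]; exact: leq_trans Hya (ltnW Hlt).
    have Hrb' := rk_max Hxb Hmb; rewrite HcX /= in Hrb'.
    have Hrab : rk X xa < rk X xb by apply: rk_lt.
    case: ifP Hrel => Ho [Ejp Ejq].
      have Eik : i = k by rewrite -Hrb' Hrb Ejq.
      by move: Ho; rewrite Eik subnn.
    by move: Hrab; rewrite Hra Hrb Ejp Ejq /=; apply: lt_pred_false.
  + have Hbp' : xb \in p by rewrite Ep memD1 // eq_sym.
    apply: ltn_trans (Htinvp _ Hbp') _.
    case: (ltngtP (pos w xa) (pos w xb)) => // [Hlt'|Heq]; last first.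
      by move: Hab; rewrite (pos_inj Heq) eqxx.
    exfalso; apply: (quasi_not_inv Hqu) => u v Hu Hv Huv.
    case: (u =P xa) => [Eu|Hua].
      case: (v =P xb) => [Ev|Hvb].
        by move: Huv; rewrite Eu Ev ltnNge (ltnW Hlt).
      have Huq : u \in q by rewrite Eq memD1 // Eu.
      have Hvq : v \in q by rewrite Eq memD1 //; apply/eqP.
      exact: HiQ Huq Hvq Huv.
    case: (v =P xa) => [Ev|Hva]; last first.
      have Hup : u \in p by rewrite Ep memD1 //; apply/eqP.
      have Hvp : v \in p by rewrite Ep memD1 //; apply/eqP.
      exact: HiP Hup Hvp Huv.
    case: (u =P xb) => [Eu|Hub]; first by rewrite Eu Ev.
    have Huq : u \in q by rewrite Eq memD1 //; apply/eqP.
    have Hvq : v \in q by rewrite Eq memD1 // Ev.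
    exact: HiQ Huq Hvq Huv.
have HtX' : tinv w t X := tinv_ext Htinvp Ep Hta.
have Hlift := @qrel_lift n w k p q t.
rewrite -EX in Hlift; have Hq2 := Hlift HbX HtX' Hqr.
apply: (R2 HpR Hq2).
by rewrite !subUset !sub1set HtS Hp Hq.
Qed.

Lemma rk_pair X i : 0 < i -> i.+1 <= #|X| ->
  exists xa xb, [/\ xa \in X, xb \in X, xa < xb, del X i = X :\ xa & del X i.+1 = X :\ xb]
   /\ rk X xb = i.
Proof.
move=> Hi1 Hi2.
have Hb0 : 0 < i <= #|X| by rewrite Hi1 ltnW.
have Hb1 : 0 < i.+1 <= #|X| by rewrite Hi2.
have [xa Hxa [Hra Exa]] := del_ex Hb0.
have [xb Hxb [Hrb Exb]] := del_ex Hb1.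
exists xa, xb; split => //; split => //.
by apply: (rk_ltI Hxa Hxb); rewrite Hra Hrb /= ltn_predL.
Qed.

Lemma F3R X i p q : X \in R -> 0 < i <= k -> p = del X i -> q = del X i.+1 ->
  p \subset S -> q \subset S -> t \notin p -> t \notin q -> t |: p \in R -> t |: q \in R.
Proof.
move=> HXR Hi Ep Eq Hp Hq Htp Htq HpR.
have /inv_setP [HcX HiX] := R1 HXR.
have Htinvp : tinv w t p.
  by have /inv_setP [_ Hi'] := R1 HpR; apply: tinv_of => //; apply: below_of.
have EX : X = p :|: q by rewrite Ep Eq (delU_i HcX Hi).
have HXS : X \subset S by rewrite EX subUset Hp Hq.
have HtX : t \notin X by rewrite EX inE negb_or Htp Htq.
have HbX := below_of HXS HtX.
case/andP: (Hi) => Hi1 Hik.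
have Hb0 : 0 < i <= #|X| by rewrite HcX bnd_i.
have Hb1 : 0 < i.+1 <= #|X| by rewrite HcX bnd_iS.
have [xa [xb [[Hxa Hxb Hab Exa Exb] _]]] := rk_pair Hi1 (proj2 (andP Hb1)).
have Hbp : xb \in p by rewrite Ep Exa memD1 // neq_ltn Hab orbT.
have Hta : pos w t < pos w xa := ltn_trans (Htinvp _ Hbp) (HiX _ _ Hxa Hxb Hab).
have HtX' : tinv w t X by apply: tinv_ext Htinvp _ Hta; rewrite Ep.
have HinvY : inv_set w k.+2 (t |: X) by rewrite inv_add // (R1 HXR).
have HYS : t |: X \subset S by rewrite subUset sub1set HtS HXS.
have HcY : #|t |: X| = k.+2 by rewrite card_add // HcX.
have Ei : del (t |: X) i = t |: p by rewrite del_add // Ep.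
have Ei1 : del (t |: X) i.+1 = t |: q by rewrite del_add // Eq.
have Etop : del (t |: X) k.+2 = X by rewrite -HcX del_add_top.
have HbY0 : 0 < i <= #|t |: X| by rewrite HcY; apply: bnd_i; apply: bnd_i.
have HbY1 : 0 < i.+1 <= #|t |: X| by rewrite HcY; apply: bnd_i; apply: bnd_iS.
have HbYt : 0 < k.+2 <= #|t |: X| by rewrite HcY leqnn.
rewrite -Ei1 -(inPR HbY1).
case: (R3 HinvY HYS) => [Hpre|Hsuf].
  have H1 : del (t |: X) i \in Pset (t |: X) :&: R by rewrite inPR // Ei.
  exact: (prefix_up Hpre H1 Hi1 (leqnSn i) (proj2 (andP HbY1))).
have H1 : del (t |: X) k.+2 \in Pset (t |: X) :&: R by rewrite inPR // Etop.
apply: (suffix_down Hsuf H1 (ltn0Sn i)) => //.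
by rewrite ltnS ltnW.
Qed.

Lemma F3N X i p q : inv_set w k.+1 X -> X \notin R -> 0 < i <= k -> p = del X i.+1 -> q = del X i ->
  p \subset S -> q \subset S -> t \notin p -> t \notin q -> t |: p \in R -> t |: q \in R.
Proof.
move=> HXi HXR Hi Ep Eq Hp Hq Htp Htq HpR.
have /inv_setP [HcX HiX] := HXi.
have Htinvp : tinv w t p.
  by have /inv_setP [_ Hi'] := R1 HpR; apply: tinv_of => //; apply: below_of.
have EX : X = p :|: q by rewrite Ep Eq setUC (delU_i HcX Hi).
have HXS : X \subset S by rewrite EX subUset Hp Hq.
have HtX : t \notin X by rewrite EX inE negb_or Htp Htq.
have HbX := below_of HXS HtX.
case/andP: (Hi) => Hi1 Hik.
have Hb0 : 0 < i <= #|X| by rewrite HcX bnd_i.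
have Hb1 : 0 < i.+1 <= #|X| by rewrite HcX bnd_iS.
have [xa [xb [[Hxa Hxb Hab Exa Exb] Hrb]]] := rk_pair Hi1 (proj2 (andP Hb1)).
have HYS : t |: X \subset S by rewrite subUset sub1set HtS HXS.
have HcY : #|t |: X| = k.+2 by rewrite card_add // HcX.
have Ei : del (t |: X) i = t |: q by rewrite del_add // Eq.
have Ei1 : del (t |: X) i.+1 = t |: p by rewrite del_add // Ep.
have Etop : del (t |: X) k.+2 = X by rewrite -HcX del_add_top.
have HbY0 : 0 < i <= #|t |: X| by rewrite HcY; apply: bnd_i; apply: bnd_i.
have HbY1 : 0 < i.+1 <= #|t |: X| by rewrite HcY; apply: bnd_i; apply: bnd_iS.
have HbYt : 0 < k.+2 <= #|t |: X| by rewrite HcY leqnn.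
case: (ltnP (pos w t) (pos w xb)) => Htb.
  have HtX' : tinv w t X by apply: tinv_ext Htinvp _ Htb; rewrite Ep.
  have HinvY : inv_set w k.+2 (t |: X) by rewrite inv_add.
  have H1 : del (t |: X) i.+1 \in Pset (t |: X) :&: R by rewrite inPR // Ei1.
  case: (R3 HinvY HYS) => [Hpre|Hsuf].
    have := prefix_up Hpre H1 (ltn0Sn i) _ (proj2 (andP HbYt)).
    by rewrite inPR // Etop (negbTE HXR) => /(_ (ltnW (proj2 (andP (bnd_iS Hi))))).
  have := suffix_down Hsuf H1 Hi1 (leqnSn i) (proj2 (andP HbY1)).
  by rewrite inPR // Ei.
exfalso.
have Eik : i = k.
  case: (ltngtP i k) Hik => // Hlt _.
  have [xc Hxc Hrc] : exists2 xc, xc \in X & rk X xc = i.+1 by apply: rk_surj; rewrite HcX ltnS.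
  have Hbc : xb < xc by apply: (rk_ltI Hxb Hxc); rewrite Hrb Hrc.
  have Hcp : xc \in p by rewrite Ep Exb memD1 // neq_ltn Hbc orbT.
  have := ltn_trans (Htinvp _ Hcp) (HiX _ _ Hxb Hxc Hbc).
  by rewrite ltnNge Htb.
have Hq2 : qrel w k.+1 X (t |: p).
  exists (t |: X), k.+1; split => //.
  - rewrite quasiE; apply/cards1P; exists (xb, t); apply/setP => -[u v].
    rewrite !inE /= xpair_eqE; apply/idP/idP.
      case/and4P => Hu Hv Huv Hni.
      have Evt : v = t.
        case: (v =P t) => // /eqP Hvt; exfalso; move: Hv; rewrite (negbTE Hvt) /= => HvX.
        move: Hu; case/orP => [/eqP Eut|HuX].
          by move: (HbX _ HvX); rewrite -Eut ltnNge (ltnW Huv).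
        by move: Hni; rewrite /Defs.inv_pair HiX.
      move: Hni Huv; rewrite Evt eqxx andbT => Hni Hut.
      move: Hu; case/orP => [/eqP Eut|HuX]; first by move: Hut; rewrite Eut ltnn.
      apply/eqP/val_inj/eqP; apply/negP => Hub.
      have Hup : u \in p by rewrite Ep Exb memD1 //; apply/negP => /eqP E; move: Hub; rewrite E eqxx.
      by move: Hni; rewrite /Defs.inv_pair Htinvp.
    case/andP => /eqP -> /eqP ->.
    by rewrite eqxx Hxb orbT /= HbX // /Defs.inv_pair -leqNgt Htb.
  - by rewrite leqnn.
  - apply/(@pset_good n w (t |: X) k.+1 k.+1 (ltn0Sn k) (eq_leq (esym HcY))) => j; rewrite HcY => /andP [Hj1 Hj2].
    case: (ltngtP j k.+2) Hj2 => // [Hjlt _|-> _]; last by rewrite Etop HXi orbT.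
    have Hj : 0 < j <= #|X| by rewrite HcX Hj1 -ltnS.
    rewrite del_add // orbF.
    case: (ltngtP j k.+1) Hjlt => [Hjk _|Hgt Hlt|-> _]; last by rewrite (_ : del X k.+1 = p) ?(R1 HpR) // Ep Eik.
      2: by move: Hlt; rewrite ltnS leqNgt Hgt.
    apply/negbTE/negP => /inv_setP [_ Hinv].
    have [xj Hxj [Hrj Exj]] := del_ex Hj.
    have Hbj : xb \in del X j.
      rewrite Exj memD1 //; apply/negP => /eqP E; move: Hrj; rewrite -E Hrb Eik.
      by move=> Ekj; move: Hjk; rewrite Ekj prednK // ltnn.
    have := Hinv xb t (setU1r t Hbj) (setU11 t (del X j)) (HbX _ Hxb).
    by rewrite ltnNge Htb.
  - by rewrite subnn /= Etop -Ei1 Eik.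
by move: HXR; rewrite (R2 HpR Hq2) // subUset HXS subUset sub1set HtS Hp.
Qed.

Lemma F3 p q : edgeS S k R p q -> t \notin p -> t \notin q -> t |: p \in R -> t |: q \in R.
Proof.
move=> [[Hip Hiq He] [Hp Hq]] Htp Htq HpR.
case: He.
- by move=> Hqr; apply: (F3q Hip Hiq Hqr).
- by move=> [X [i [HX Hi [Ep Eq]]]]; apply: (F3R HX Hi Ep Eq).
- by move=> [X [i [HXi HX Hi [Ep Eq]]]]; apply: (F3N HXi HX Hi Ep Eq).
Qed.

Definition ph A := if t \in A then 1 else if t |: A \in R then 2 else 0.

Lemma ph_mono A B : edgeS S k R A B -> ph A <= ph B.
Proof.
move=> He; rewrite /ph.
case HA: (t \in A); case HB: (t \in B) => //.
- by rewrite (F1 He HA (negbT HB)).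
- by rewrite (negbTE (F2 He (negbT HA) HB)).
- case HAR: (t |: A \in R) => //.
  by rewrite (F3 He (negbT HA) (negbT HB) HAR).
Qed.

End Fix.
Section Contr.
Variables (S : {set 'I_n}) (t : 'I_n) (k : nat) (R : {set {set 'I_n}}).
Hypothesis HtS : t \in S.
Hypothesis Hmax : forall x, x \in S -> x <= t.
Hypothesis HC : consS S k.+1 R.

Definition Dc := [set x in S | (x != t) && (pos w t < pos w x)].
Definition Rc := [set Z : {set 'I_n} | (Z \subset Dc) && inv_set w k.+1 Z && (t |: Z \notin R)].

Lemma Dc_sub : Dc \subset S :\ t.
Proof. by apply/subsetP => x; rewrite !inE => /andP [-> /andP [-> _]]. Qed.

Lemma card_Dc : #|Dc| < #|S|.
Proof.
apply: (leq_ltn_trans (subset_leq_card Dc_sub)).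
by rewrite (cardsD1 t S) HtS.
Qed.

Lemma below_Dc Z : Z \subset Dc -> below t Z.
Proof.
move=> /subsetP HZ x /HZ; rewrite !inE => /andP [HxS /andP [Hxt _]].
by rewrite ltn_neqAle Hmax // andbT val_eqE.
Qed.

Lemma tinv_Dc Z : Z \subset Dc -> tinv w t Z.
Proof. by move=> /subsetP HZ x /HZ; rewrite !inE => /andP [_ /andP [_ ->]]. Qed.

Lemma Dc_S Z : Z \subset Dc -> t |: Z \subset S.
Proof.
move=> HZ; rewrite subUset sub1set HtS; apply: subset_trans HZ _.
by apply: subset_trans Dc_sub _; apply: subD1set.
Qed.

Lemma cons_c : consS Dc k Rc.
Proof.
case: HC => HR1 HR2 HR3; split.
- by move=> Y; rewrite inE => /andP [/andP [_ ->]].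
- move=> Y Z; rewrite !inE => /andP [/andP [HYD HYi] HYR] Hqr HZY.
  have [HZi _] := qrel_inv Hqr.
  have HZD : Z \subset Dc by apply: subset_trans HZY; apply: subsetUl.
  rewrite HZD HZi /=; apply/negP => HZR.
  have Hq2 := @qrel_lift n w k.+1 Z Y t (below_Dc HZY) (tinv_Dc HZY) Hqr.
  move/negP: HYR; apply; apply: (HR2 _ _ HZR Hq2).
  by rewrite subUset !Dc_S.
- move=> Z HZi HZD.
  have HbZ := below_Dc HZD; have HtZ := tinv_Dc HZD.
  have HZi' : inv_set w k.+3 (t |: Z) by rewrite inv_add.
  have /inv_setP [HcZ _] := HZi.
  have HcZ' : #|t |: Z| = k.+3 by rewrite card_add // HcZ.
  have Hdel : forall j, 0 < j <= #|Z| -> (del Z j \in Pset Z :&: Rc) = (t |: del Z j \notin R).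
    move=> j Hj; rewrite inE del_Pset // inE inv_del //= andbT.
    by rewrite (subset_trans (del_sub Z j) HZD).
  have Hdel' : forall j, 0 < j <= #|Z| -> (t |: del Z j \in R) = (del (t |: Z) j \in Pset (t |: Z) :&: R).
    move=> j Hj; have Hj' : 0 < j <= #|t |: Z| by rewrite card_add //; case/andP: Hj => -> /leqW ->.
    by rewrite (inPR _ Hj') del_add.
  case: (HR3 _ HZi' (Dc_S HZD)) => [[i0 H]|[i0 H]].
  + right; exists i0.-1 => Y; split.
      case/setIP => /mem_Pset [j [Hj EY]] HYR.
      exists j; case/andP: (Hj) => Hj1 Hj2; split => //.
      apply: lt_le_pred; rewrite ltnNge; apply/negP => Hij.
      have : t |: del Z j \in R.
        rewrite Hdel' //; apply/H; exists j; split => //; rewrite card_add //.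
        exact: leqW.
      by move: HYR; rewrite EY inE => /andP [_ /negP].
    case=> j [Hj1 Hji Hjz ->].
    have Hj : 0 < j <= #|Z| by rewrite Hj1 Hjz.
    rewrite Hdel //; apply/negP; rewrite Hdel' // => /H [j0 [Hi0 Hj01 Hj0 E]].
    have Ej : j = j0 by apply: (del_inj _ _ E); rewrite ?Hj01 ?Hj0 // Hj1 card_add // leqW.
    by move: (le_pred_lt Hj1 Hji); rewrite Ej ltnNge Hi0.
  + left; exists i0.+1 => Y; split.
      case/setIP => /mem_Pset [j [Hj EY]] HYR.
      exists j; case/andP: (Hj) => Hj1 Hj2; split => //.
      rewrite ltnNge; apply/negP => Hij.
      have : t |: del Z j \in R.
        rewrite Hdel' //; apply/H; exists j; split => //; rewrite card_add //.
        exact: leqW.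
      by move: HYR; rewrite EY inE => /andP [_ /negP].
    case=> j [Hij Hj1 Hjz ->].
    have Hj : 0 < j <= #|Z| by rewrite Hj1 Hjz.
    rewrite Hdel //; apply/negP; rewrite Hdel' // => /H [j0 [Hj01 Hi0 Hj0 E]].
    have Ej : j = j0 by apply: (del_inj _ _ E); rewrite ?Hj01 ?Hj0 // Hj1 card_add // leqW.
    by move: Hij; rewrite Ej ltnNge Hi0.
Qed.

Lemma sub_Dc A : A \subset S -> invP w A -> t \in A -> A :\ t \subset Dc.
Proof.
move=> /subsetP HA HiA HtA; apply/subsetP => x; rewrite !inE => /andP [Hxt HxA].
rewrite HA //= Hxt /=; apply: HiA => //.
by rewrite ltn_neqAle Hmax ?HA // andbT val_eqE.
Qed.

Lemma inv_D1 m A : inv_set w m.+1 A -> t \in A -> inv_set w m (A :\ t).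
Proof.
case/inv_setP => Hc Hi HtA; apply/inv_setP; split.
  by move: Hc; rewrite (cardsD1 t A) HtA => -[].
by apply: invP_sub Hi; apply: subD1set.
Qed.

Lemma drop_del X j : X \subset S -> t \in X -> 0 < j <= #|X :\ t| -> del X j :\ t = del (X :\ t) j.
Proof.
move=> HXS HtX Hj.
have Hb : below t (X :\ t).
  move=> x; rewrite !inE => /andP [Hxt HxX]; rewrite ltn_neqAle Hmax ?(subsetP HXS) // andbT.
  by rewrite val_eqE.
rewrite -{1}(setD1K HtX) del_add // setU1K' //.
apply/negP => /(subsetP (del_sub _ j)); rewrite !inE eqxx //.
Qed.

Lemma top_idx X i : X \subset S -> t \in X -> #|X| = k.+2 -> 0 < i <= k.+1 -> t \in del X i.+1 -> i <= k.
Proof.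
move=> HXS HtX Hc /andP [Hi1 Hik] Ht.
case: (ltngtP i k.+1) Hik => // Heq _.
move: Ht; rewrite Heq -Hc (del_top HtX (max_of Hmax HXS)) !inE eqxx //.
Qed.

Lemma edge_c A B : edgeS S k.+1 R A B -> t \in A -> t \in B -> edgeS Dc k Rc (B :\ t) (A :\ t).
Proof.
move=> [[HiA HiB He] [HA HB]] HtA HtB.
have /inv_setP [HcA HiA'] := HiA; have /inv_setP [HcB HiB'] := HiB.
split; last by split; apply: sub_Dc.
split; try by apply: inv_D1.
case: He.
- move=> Hqr; constructor 1; apply: qrel_drop => //.
  by move=> x; rewrite inE => /orP [] Hx; apply: Hmax; [apply: (subsetP HA) | apply: (subsetP HB)].
- move=> [X [i [HX Hi [EA EB]]]].
  case: HC => HR1 _ _.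
  have HXi := HR1 _ HX; have /inv_setP [HcX HiX] := HXi.
  have EX : X = A :|: B by rewrite EA EB (delU_i HcX Hi).
  have HXS : X \subset S by rewrite EX subUset HA HB.
  have HtX : t \in X by rewrite EX inE HtA.
  have Hik : i <= k by apply: (top_idx HXS HtX HcX Hi); rewrite -EB.
  have HcX' : #|X :\ t| = k.+1 by move: HcX; rewrite (cardsD1 t X) HtX => -[].
  case/andP: Hi => Hi1 _.
  constructor 3; exists (X :\ t), i; split.
  + exact: inv_D1.
  + by rewrite inE negb_and negbK setD1K // HX orbT.
  + by rewrite Hi1 Hik.
  + have Hb0 : 0 < i <= #|X :\ t| by rewrite HcX'; apply: bnd_i; rewrite Hi1.
    have Hb1 : 0 < i.+1 <= #|X :\ t| by rewrite HcX'; apply: bnd_iS; rewrite Hi1.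
    by rewrite EA EB !drop_del.
- move=> [X [i [HXi HX Hi [EA EB]]]].
  have /inv_setP [HcX HiX] := HXi.
  have EX : X = A :|: B by rewrite EA EB setUC (delU_i HcX Hi).
  have HXS : X \subset S by rewrite EX subUset HA HB.
  have HtX : t \in X by rewrite EX inE HtA.
  have Hik : i <= k by apply: (top_idx HXS HtX HcX Hi); rewrite -EA.
  have HcX' : #|X :\ t| = k.+1 by move: HcX; rewrite (cardsD1 t X) HtX => -[].
  case/andP: Hi => Hi1 _.
  constructor 2; exists (X :\ t), i; split.
  + rewrite inE sub_Dc // inv_D1 //= setD1K //; exact/negP.
  + by rewrite Hi1 Hik.
  + have Hb0 : 0 < i <= #|X :\ t| by rewrite HcX'; apply: bnd_i; rewrite Hi1.
    have Hb1 : 0 < i.+1 <= #|X :\ t| by rewrite HcX'; apply: bnd_iS; rewrite Hi1.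
    by rewrite EA EB !drop_del.
Qed.

End Contr.
Lemma consS_sub S S' k R : S' \subset S -> consS S k R -> consS S' k R.
Proof.
move=> HS [H1 H2 H3]; split => //.
- by move=> Y Z HY Hq HZ; apply: H2 HY Hq (subset_trans HZ HS).
- by move=> X HX HXS; apply: H3 HX (subset_trans HXS HS).
Qed.

Lemma edge0 S R A B : edgeS S 0 R A B -> False.
Proof.
move=> [He _]; case: He => _ _ [].
- by move=> [X [i [_ _ /andP [Hi1 Hi2] _ _]]]; move: Hi1; rewrite lt0n; move: Hi2; rewrite leqn0 => /eqP ->.
- by move=> [X [i [_ /andP [Hi1 Hi2] _]]]; move: Hi1; rewrite lt0n; move: Hi2; rewrite leqn0 => /eqP ->.
- by move=> [X [i [_ _ /andP [Hi1 Hi2] _]]]; move: Hi1; rewrite lt0n; move: Hi2; rewrite leqn0 => /eqP ->.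
Qed.

End Main.

Section CT.
Variable T : Type.
Implicit Types (e : T -> T -> Prop).

Lemma ct_map e1 e2 (f : T -> T) x y : (forall a b, e1 a b -> e2 (f a) (f b)) ->
  clos_trans _ e1 x y -> clos_trans _ e2 (f x) (f y).
Proof.
move=> H; elim => [a b /H Hab|a b c _ IH1 _ IH2]; first exact: t_step.
exact: t_trans IH1 IH2.
Qed.

Lemma ct_rmap e1 e2 (f : T -> T) x y : (forall a b, e1 a b -> e2 (f b) (f a)) ->
  clos_trans _ e1 x y -> clos_trans _ e2 (f y) (f x).
Proof.
move=> H; elim => [a b /H Hab|a b c _ IH1 _ IH2]; first exact: t_step.
exact: t_trans IH2 IH1.
Qed.

Lemma ct_le e (ph : T -> nat) x y : (forall a b, e a b -> ph a <= ph b) ->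
  clos_trans _ e x y -> ph x <= ph y.
Proof.
move=> H; elim => [a b /H //|a b c _ IH1 _ IH2]; exact: leq_trans IH1 IH2.
Qed.

Lemma ct_const e (ph : T -> nat) p x y : (forall a b, e a b -> ph a <= ph b) ->
  clos_trans _ e x y -> ph x = p -> ph y = p ->
  clos_trans _ (fun a b => e a b /\ ph a = p /\ ph b = p) x y.
Proof.
move=> H; elim => [a b Hab Ha Hb|a b c Hab IH1 Hbc IH2 Ha Hc]; first exact: t_step.
have Hb1 := ct_le H Hab; have Hb2 := ct_le H Hbc.
have Hb : ph b = p by apply/eqP; rewrite eqn_leq -{1}Hc Hb2 -Ha Hb1.
exact: t_trans (IH1 Ha Hb) (IH2 Hb Hc).
Qed.

Lemma ct_first e x y : clos_trans _ e x y -> exists z, e x z.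
Proof. by elim => [a b Hab|a b c _ [z Hz] _ _]; [exists b | exists z]. Qed.

End CT.

Lemma main_ind n (w : 'S_n) N : forall (S : {set 'I_n}) k R, #|S| < N -> consS w S k R ->
  forall A, ~ clos_trans _ (edgeS w S k R) A A.
Proof.
elim: N => // N IH S k R HSN HC A Hc.
case: (pickP (mem S)) => [t0 Ht0|HS0]; last first.
  have [z [[HiA _ _] [HAS _]]] := ct_first Hc.
  case: k HC Hc HiA => [|k] HC Hc HiA.
    by case: (ct_first Hc) => z' /edge0.
  case/inv_setP: HiA => HcA _.
  have : #|A| <= #|S| by apply: subset_leq_card.
  by rewrite (eq_card0 HS0) HcA.
case: (arg_maxnP (fun x : 'I_n => val x) Ht0) => t HtS Hmax'.
have Hmax : forall x, x \in S -> x <= t by move=> x Hx; apply: Hmax'.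
have Hmono : forall a b, edgeS w S k R a b -> ph t R a <= ph t R b.
  by move=> a b; apply: ph_mono.
case E1: (ph t R A == 1).
- have Hc' := ct_const Hmono Hc (eqP E1) (eqP E1).
  have HtA : t \in A by move: E1; rewrite /ph; case: (t \in A) => //; case: (_ \in R).
  case: k HC Hc Hmono Hc' => [|k] HC Hc Hmono Hc'.
    by case: (ct_first Hc) => z' /edge0.
  have Hc2 : clos_trans _ (edgeS w (Dc w S t) k (Rc w S t k R)) (A :\ t) (A :\ t).
    apply: (@ct_rmap _ _ _ (fun X => X :\ t) A A _ Hc') => a b [Hab [Ha Hb]].
    have Hta : t \in a by move: Ha; rewrite /ph; case: (t \in a) => //; case: (_ \in R).
    have Htb : t \in b by move: Hb; rewrite /ph; case: (t \in b) => //; case: (_ \in R).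
    exact: edge_c.
  apply: (IH _ _ _ _ (cons_c HtS Hmax HC) _ Hc2).
  exact: (leq_trans (card_Dc w HtS) (HSN : #|S| <= N)).
- have Hc' := ct_const Hmono Hc (erefl (ph t R A)) (erefl (ph t R A)).
  have Hc2 : clos_trans _ (edgeS w (S :\ t) k R) A A.
    apply: (@ct_map _ _ _ id _ _ _ Hc') => a b [[He [Ha Hb]] [Hpa Hpb]].
    have Hta : t \notin a by apply/negP => Hta; move: E1; rewrite -Hpa /ph Hta.
    have Htb : t \notin b by apply/negP => Htb; move: E1; rewrite -Hpb /ph Htb.
    split => //; split; apply/subsetP => x Hx; rewrite !inE; apply/andP; split.
    + by apply/negP => /eqP Ex; move: Hta; rewrite -Ex Hx.
    + exact: (subsetP Ha).
    + by apply/negP => /eqP Ex; move: Htb; rewrite -Ex Hx.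
    + exact: (subsetP Hb).
  apply: (IH _ _ _ _ (consS_sub (subD1set S t) HC) _ Hc2).
  apply: (leq_trans _ (HSN : #|S| <= N)).
  by rewrite (cardsD1 t S) (HtS : t \in S).
Qed.

Theorem lemma3p11 (n : nat) (k : nat) (w : 'S_n) (R : {set {set 'I_n}}) :
  0 < n -> 1 <= k <= n -> consistent w k R -> GR_acyclic w k R.
Proof.
move=> _ _ [[HR1 HR2] HR3] A Hc.
have HC : consS w [set: 'I_n] k R.
  split => //.
  - move=> Y Z HY Hq _; apply: (HR2 Y Z HY); split; [|split].
    + by case: (qrel_inv Hq).
    + exact: HR1.
    + exact: rt_step.
  - by move=> X HX _; apply: HR3.
apply: (@main_ind n w #|[set: 'I_n]|.+1 _ k R (ltnSn _) HC A).
apply: (@ct_map _ _ _ id _ _ _ Hc) => a b Hab; split => //; split; apply: subsetT.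
Qed.
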